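(* Let $L$ be a linear subspace of $\mathbb{R}^d$ of dimension $l\ge 1$, let $B_L$ be a basis of $L^\perp$, let $k\ge 1$ and let $P$ be a set of $m=l-1+k$ points in $\mathbb{R}^d$ such that $P\cup B_L$ is in generic position. Consider the collections $\{h_1,\dots,h_k\}$ of $k$ parallel affine hyperplanes with a common normal vector lying in $L$ whose union contains $P$. Then the map $\{h_1,\dots,h_k\}\mapsto\{h_1\cap P,\dots,h_k\cap P\}$ is a bijection from the set of such collections onto the set of partitions of $P$ into $k$ nonempty sets (in particular, each $h_j$ contains a point of $P$ and the $h_j$ are distinct).
   Context: A finite set $S$ of points/vectors in $\mathbb{R}^d$ is in generic position if the $d|S|$ coordinates of its elements are algebraically independent over $\mathbb{Q}$ (no nonzero polynomial with integer coefficients vanishes on them). *)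

(* Defs.v *)
From HB Require Import structures.
From mathcomp Require Import all_boot all_order all_algebra.
From mathcomp Require Import boolp classical_sets functions reals.
From mathcomp Require Import mpoly.
Set Implicit Arguments. Unset Strict Implicit. Unset Printing Implicit Defensive.
Import Order.TTheory GRing.Theory Num.Theory.
Local Open Scope ring_scope.
Local Open Scope classical_set_scope.

Section Defs.
Variables (R : realType) (d : nat).

Definition dotv (u v : 'rV[R]_d) : R := (u *m v^T) 0 0.

Definition basis_of_perp (L : {vspace 'rV[R]_d}) (B : seq 'rV[R]_d) : Prop :=
  [/\ free B,
      (forall b, b \in B -> forall u, u \in L -> dotv u b = 0) &
      (forall v, (forall u, u \in L -> dotv u v = 0) -> v \in <<B>>%VS)].

(* algebraic independence over Q of a finite family of reals:
   no nonzero polynomial with integer coefficients vanishes on it *)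
Definition alg_indep (n : nat) (x : 'I_n -> R) : Prop :=
  forall p : mpoly.mpoly n int, p != 0 -> mpoly.mmap (intr : int -> R) x p != 0.

(* a finite family of points is in generic position: its d*|S| coordinates are
   algebraically independent over Q *)
Definition generic_position (S : seq 'rV[R]_d) : Prop :=
  alg_indep (fun i => mxvec (\matrix_(a < size S, j < d) (nth 0 S a) 0 j) 0 i).

Definition hyperplane (a : 'rV[R]_d) (c : R) : set 'rV[R]_d :=
  [set x | dotv a x = c].

Definition good_collection (L : {vspace 'rV[R]_d}) (k m : nat)
    (P : 'I_m -> 'rV[R]_d) (C : set (set 'rV[R]_d)) : Prop :=
  exists2 a : 'rV[R]_d, (a != 0) && (a \in L) &
    exists h : 'I_k -> set 'rV[R]_d,
      [/\ injective h, C = range h,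
          (forall j, exists c, h j = hyperplane a c) &
          (forall i, exists j, h j (P i))].

(* the trace map {h_1,...,h_k} |-> {h_1 ∩ P, ..., h_k ∩ P}, where subsets of
   P = {P i | i < m} are encoded by their index sets *)
Definition trace_of (m : nat) (P : 'I_m -> 'rV[R]_d) (h : set 'rV[R]_d)
  : {set 'I_m} := [set i | `[< h (P i) >]]%SET.

Definition traces (m : nat) (P : 'I_m -> 'rV[R]_d) (C : set (set 'rV[R]_d))
  : {set {set 'I_m}} :=
  [set B | `[< exists2 h, C h & B = trace_of P h >]]%SET.

Definition k_partition (m k : nat) (Q : {set {set 'I_m}}) : Prop :=
  finset.partition Q [set: 'I_m]%SET /\ #|Q| = k.

End Defs.

(* Main.v *)
Require Import Defs.
From HB Require Import structures.
From mathcomp Require Import all_boot all_order all_algebra.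
From mathcomp Require Import boolp classical_sets functions reals.
From mathcomp Require Import mpoly.
From mathcomp Require Import zify.
Set Implicit Arguments. Unset Strict Implicit. Unset Printing Implicit Defensive.
Import Order.TTheory GRing.Theory Num.Theory.
Local Open Scope ring_scope.

Section M.
Variable R : realType.

Lemma GL2 n d (x : 'M[R]_(n, d)) : alg_indep (fun i => mxvec x 0 i) ->
  forall (Vp : 'M[{mpoly int[n * d]}]_d) (z : 'M[int]_(n, d)),
  \det (map_mx (meval (fun i => mxvec z 0 i)) Vp) != 0 ->
  \det (map_mx (mmap intr (fun i => mxvec x 0 i)) Vp) != 0.
Proof.
move=> H Vp z; rewrite !det_map_mx => nz; apply: H.
by apply: contra nz => /eqP ->; rewrite raddf0.
Qed.

Lemma dotvE d (u v : 'rV[R]_d) : dotv u v = \sum_j u 0 j * v 0 j.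
Proof. by rewrite /dotv mxE; apply: eq_bigr => j _; rewrite mxE. Qed.

Lemma dotvBr d (u v w : 'rV[R]_d) : dotv u (v - w) = dotv u v - dotv u w.
Proof. by rewrite !dotvE -sumrB; apply: eq_bigr => j _; rewrite !mxE mulrBr. Qed.

Variables (d m : nat) (P : 'I_m -> 'rV[R]_d) (B : seq 'rV[R]_d).
Let S := [seq P i | i <- enum 'I_m] ++ B.
Let nB := size B.
Hypothesis Hgen : generic_position S.

Lemma hn : size S = (m + nB)%N.
Proof. by rewrite size_cat size_map size_enum_ord. Qed.

Let posP (i : 'I_m) : 'I_(size S) := cast_ord (esym hn) (lshift nB i).
Let posB (t : 'I_nB) : 'I_(size S) := cast_ord (esym hn) (rshift m t).

Lemma nth_posP i : nth 0 S (posP i) = P i.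
Proof.
rewrite /= nth_cat size_map size_enum_ord ltn_ord (nth_map i) ?size_enum_ord //.
by rewrite nth_ord_enum.
Qed.

Lemma nth_posB t : nth 0 S (posB t) = nth 0 B t.
Proof. by rewrite /= nth_cat size_map size_enum_ord ltnNge leq_addr /= addKn. Qed.


Lemma vposP i : val (posP i) = val i. Proof. by []. Qed.
Lemma vposB t : val (posB t) = (m + t)%N. Proof. by []. Qed.
Lemma eq_posP i i' : (posP i == posP i') = (i == i').
Proof. by rewrite -[LHS]val_eqE !vposP val_eqE. Qed.
Lemma eq_posB t t' : (posB t == posB t') = (t == t').
Proof.
by rewrite -[LHS]val_eqE !vposB eqn_add2l val_eqE.
Qed.
Lemma eq_posBP t i : (posB t == posP i) = false.
Proof.
apply/negbTE; apply/negP => /eqP /(congr1 val); rewrite vposB vposP => E.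
by have := ltn_ord i; rewrite -E ltnNge leq_addr.
Qed.

Lemma Mzero nd (i j : 'I_nd -> 'I_m) : injective i -> (forall s s', j s != i s') ->
  forall a : 'rV[R]_d, (forall b, b \in B -> dotv a b = 0) ->
  (forall s, dotv a (P (i s)) = dotv a (P (j s))) ->
  (forall r : 'I_d, (nB + nd <= r)%N -> a 0 r = 0) -> a = 0.
Proof.
move=> iinj jni a aB aij aC.
pose X := \matrix_(q < size S, col < d) (nth 0 S q) 0 col.
pose Vp : 'M[{mpoly int[size S * d]}]_d := \matrix_(r, col)
  match (insub (val r) : option 'I_nB) with
  | Some t => 'X_(mxvec_index (posB t) col)
  | None => match (insub (r - nB)%N : option 'I_nd) with
     | Some s => 'X_(mxvec_index (posP (i s)) col) - 'X_(mxvec_index (posP (j s)) col)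
     | None => ((r == col)%:R) end end.
pose Zv := \matrix_(q < size S, col < d)
  ((([exists t : 'I_nB, (q == posB t) && (val t == val col)] ||
     [exists s : 'I_nd, (q == posP (i s)) && (nB + s == val col)%N]) : nat)%:R : int).
have Hev : map_mx (meval (fun k => mxvec Zv 0 k)) Vp = 1.
  apply/matrixP => r col; rewrite !mxE.
  case: insubP => [t _ vt | ].
    rewrite mevalXU mxvecE mxE; congr (_ %:R); congr nat_of_bool.
    have -> : [exists s, (posB t == posP (i s)) && (nB + s == col)%N] = false.
      by apply/negbTE/existsPn => s; rewrite eq_posBP.
    rewrite orbF; apply/existsP/idP => [[t' /andP[E1 /eqP E2]]|].
      by move: E1; rewrite eq_posB => /eqP E1; apply/eqP/val_inj; rewrite /= -vt E1 E2.
    by move=> /eqP E; exists t; rewrite eqxx vt E eqxx.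
  rewrite -leqNgt => rB.
  case: insubP => [s _ vs | ].
    rewrite raddfB /= !mevalXU !mxvecE !mxE.
    have -> : [exists t, (posP (i s) == posB t) && (t == col :> nat)] = false.
      by apply/negbTE/existsPn => t; rewrite eq_sym eq_posBP.
    have -> : [exists t, (posP (j s) == posB t) && (t == col :> nat)] = false.
      by apply/negbTE/existsPn => t; rewrite eq_sym eq_posBP.
    have -> : [exists s', (posP (j s) == posP (i s')) && (nB + s' == col)%N] = false.
      by apply/negbTE/existsPn => s'; rewrite eq_posP (negbTE (jni _ _)).
    rewrite subr0; congr (_ %:R); congr nat_of_bool.
    have rE : val r = (nB + s)%N by rewrite vs subnKC.
    rewrite -[r == col]val_eqE /= rE; apply/existsP/idP => [[s' /andP[]]|].
      by rewrite eq_posP => /eqP /iinj ->.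
    by move=> E; exists s; rewrite eqxx E.
  by rewrite rmorph_nat.
have Hdet := @GL2 _ _ X Hgen Vp Zv (ltac:(by rewrite Hev det1 oner_eq0)).
set V := map_mx _ Vp in Hdet.
have HV : V *m a^T = 0.
  apply/matrixP => r z; rewrite !mxE [z]ord1.
  rewrite (_ : \sum_j _ = dotv a (row r V)); last first.
    by rewrite dotvE; apply: eq_bigr => q _; rewrite !mxE mulrC.
  have mX q col : mmap intr (fun k => mxvec X 0 k) 'X_(mxvec_index q col) = nth 0 S q 0 col.
    by rewrite mmapX mmap1U mxvecE mxE.
  case: (ltnP r nB) => [rB|rB].
    pose t := Ordinal rB.
    have -> : row r V = nth 0 B t.
      apply/rowP => col; rewrite !mxE.
      case: insubP => [t' _ vt'|]; last by rewrite rB.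
      by rewrite mX nth_posB (_ : t' = t) //; exact/val_inj.
    by apply: aB; rewrite mem_nth.
  case: (ltnP (r - nB) nd) => [rs|rs].
    pose s := Ordinal rs.
    have -> : row r V = P (i s) - P (j s).
      apply/rowP => col; rewrite !mxE.
      case: insubP => [t' tB vt'|_]; first by move: tB; rewrite ltnNge rB.
      case: insubP => [s' _ vs'|]; last by rewrite rs.
      have -> : s' = s by exact/val_inj.
      by rewrite raddfB /= !mX !nth_posP.
    by rewrite dotvBr aij subrr.
  rewrite dotvE big1 // => col _; rewrite [row _ _ _ _]mxE.
  have -> : V r col = (r == col)%:R.
    rewrite !mxE.
    case: insubP => [t' tB vt'|_]; first by move: tB; rewrite ltnNge rB.
    case: insubP => [s' sB vs'|_]; first by move: sB; rewrite ltnNge rs.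
    by rewrite rmorph_nat.
  have [<-|ne] := eqVneq r col; last by rewrite mulr0.
  by rewrite aC ?mul0r // -(subnKC rB) leq_add2l.
have Vu : V \in unitmx by rewrite unitmxE unitfE.
have := mulKmx Vu (a^T); rewrite HV mulmx0 => /(congr1 trmx).
by rewrite trmxK trmx0.
Qed.
End M.

Section Comb.
Variables (m : nat) (T : finType) (f : 'I_m -> T).

Definition rep x := odflt x [pick y | f y == f x].

Lemma f_rep x : f (rep x) = f x.
Proof. by rewrite /rep; case: pickP => [y /eqP|/(_ x)] //=; rewrite eqxx. Qed.

Lemma rep_eq x y : f x = f y -> rep x = rep y.
Proof.
rewrite /rep => E; rewrite E; case: pickP => [//|/(_ y)]; by rewrite eqxx.
Qed.

Lemma rep_rep x : rep (rep x) = rep x.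
Proof. by apply: rep_eq; rewrite f_rep. Qed.

Definition Roots := [set rep x | x in 'I_m].
Definition NonRoots := ~: Roots.

Lemma card_Roots : #|Roots| = #|f @: [set: 'I_m]|.
Proof.
have -> : f @: [set: 'I_m] = f @: Roots.
  apply/setP => t; apply/imsetP/imsetP => [[x _ ->]|[y /imsetP[x _ ->] ->]].
    by exists (rep x); [apply: imset_f | rewrite f_rep].
  by exists x; rewrite ?f_rep.
rewrite card_in_imset // => y z /imsetP[x _ ->] /imsetP[x' _ ->].
by rewrite !f_rep => /rep_eq.
Qed.

Lemma card_NonRoots : #|NonRoots| = (m - #|f @: [set: 'I_m]|)%N.
Proof. by rewrite -card_Roots cardsCs finset.setCK card_ord. Qed.

Lemma pairs nd : (nd <= #|NonRoots|)%N ->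
  exists i j : 'I_nd -> 'I_m, [/\ injective i, (forall s s', j s != i s') &
    forall s, f (i s) = f (j s)].
Proof.
move=> H; exists (fun s => enum_val (widen_ord H s)).
exists (fun s => rep (enum_val (widen_ord H s))); split.
- move=> s s' /enum_val_inj E; apply/val_inj; exact: (congr1 val E).
- move=> s s'; apply/negP => /eqP E.
  have := enum_valP (widen_ord H s'); rewrite -E inE.
  by rewrite imset_f.
- by move=> s; rewrite f_rep.
Qed.

End Comb.

Section Lin.
Variable R : realType.
Lemma dotvC d (u v : 'rV[R]_d) : dotv u v = dotv v u.
Proof. by rewrite !dotvE; apply: eq_bigr => j _; rewrite mulrC. Qed.
Lemma dotvBl d (u v w : 'rV[R]_d) : dotv (u - v) w = dotv u w - dotv v w.
Proof. by rewrite dotvC dotvBr !(dotvC w). Qed.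
Lemma dotvZl d c (u w : 'rV[R]_d) : dotv (c *: u) w = c * dotv u w.
Proof. by rewrite !dotvE mulr_sumr; apply: eq_bigr => j _; rewrite !mxE mulrA. Qed.
Lemma dotv_sumZl d n (c : 'I_n -> R) (F : 'I_n -> 'rV[R]_d) w :
  dotv (\sum_s c s *: F s) w = \sum_s c s * dotv (F s) w.
Proof.
rewrite /dotv mulmx_suml summxE; apply: eq_bigr => s _.
by rewrite -scalemxAl mxE.
Qed.
Lemma dotv_self0 d (u : 'rV[R]_d) : dotv u u = 0 -> u = 0.
Proof.
rewrite dotvE => /eqP; rewrite psumr_eq0 => [/allP H|j _]; last exact: sqr_ge0.
apply/rowP => j; rewrite mxE; apply/eqP; rewrite -sqrf_eq0.
by have /implyP := H j (mem_index_enum j); apply.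
Qed.
Lemma dimrV n : \dim (fullv : {vspace 'rV[R]_n}) = n.
Proof. by rewrite dimvf /dim /= mul1n. Qed.
End Lin.

Section Main.
Variables (R : realType) (d l k : nat) (L : {vspace 'rV[R]_d}) (B : seq 'rV[R]_d)
  (P : 'I_(l - 1 + k) -> 'rV[R]_d).
Local Notation m := (l - 1 + k)%N.
Hypotheses (hl : (1 <= l)%N) (hL : \dim L = l) (hB : basis_of_perp L B)
  (hk : (1 <= k)%N) (Hgen : generic_position ([seq P i | i <- enum 'I_m] ++ B)).

Lemma aB a : a \in L -> forall b, b \in B -> dotv a b = 0.
Proof. by case: hB => _ H _ aL b bB; exact: H. Qed.

Lemma nB_ge : (d <= size B + l)%N.
Proof.
pose M : 'M[R]_(d, \dim L) := \matrix_(j, s) (vbasis L)`_s 0 j.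
pose F : 'Hom('rV[R]_d, 'rV[R]_(\dim L)) := linfun (mulmxr M).
have H1 := limg_ker_dim F fullv.
have H2 : (\dim (limg F) <= l)%N.
  by rewrite -hL -[X in (_ <= X)%N](dimrV R (\dim L)) dimvS ?subvf.
have H3 : (fullv :&: lker F <= <<B>>)%VS.
  apply/subvP => v /memv_capP[_]; rewrite memv_ker lfunE /= => /eqP vM.
  case: hB => _ _; apply => u uL.
  rewrite (coord_vbasis uL) dotv_sumZl big1 // => s _.
  have : (v *m M) 0 s = 0 by rewrite vM mxE.
  rewrite mxE => E.
  suff -> : dotv (vbasis L)`_s v = 0 by rewrite mulr0.
  by rewrite dotvC dotvE; apply: (etrans _ E); apply: eq_bigr => j _; rewrite mxE.
have H4 := dimvS H3; have H5 := dim_span B.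
by rewrite dimrV in H1; rewrite -{1}H1 leq_add // (leq_trans H4 H5).
Qed.

Lemma Zero (T : finType) (f : 'I_m -> T) a : (#|f @: [set: 'I_m]| < k)%N -> a \in L ->
  (forall x y, f x = f y -> dotv a (P x) = dotv a (P y)) -> a = 0.
Proof.
move=> hT aL ac.
have := nB_ge => hd.
have [i [j [iinj jni fij]]] : exists i j : 'I_(d - size B) -> 'I_m,
    [/\ injective i, (forall s s', j s != i s') & forall s, f (i s) = f (j s)].
  by apply: pairs; rewrite card_NonRoots; lia.
apply: (Mzero Hgen iinj jni) => //.
- exact: aB.
- by move=> s; apply: ac.
- by move=> r; have := ltn_ord r; lia.
Qed.

Lemma Uniq (T : finType) (f : 'I_m -> T) a1 a2 : (#|f @: [set: 'I_m]| <= k)%N ->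
  a1 \in L -> a2 \in L -> a1 != 0 ->
  (forall x y, f x = f y -> dotv a1 (P x) = dotv a1 (P y)) ->
  (forall x y, f x = f y -> dotv a2 (P x) = dotv a2 (P y)) ->
  exists t, a2 = t *: a1.
Proof.
move=> hT a1L a2L a1n c1 c2.
have hd := nB_ge.
case: (ltnP (size B) d) => hBd; last first.
  have [i [j [iinj jni fij]]] : exists i j : 'I_0 -> 'I_m,
      [/\ injective i, (forall s s', j s != i s') & forall s, f (i s) = f (j s)].
    by apply: pairs.
  have : a1 = 0.
    apply: (Mzero Hgen iinj jni) => //.
    - exact: aB.
    - by move=> s; apply: c1.
    - by move=> r; have := ltn_ord r; lia.
  by move/eqP; rewrite (negbTE a1n).
have [i [j [iinj jni fij]]] : exists i j : 'I_(d - size B - 1) -> 'I_m,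
    [/\ injective i, (forall s s', j s != i s') & forall s, f (i s) = f (j s)].
  by apply: pairs; rewrite card_NonRoots; lia.
have d0 : (d.-1 < d)%N by lia.
pose r0 : 'I_d := Ordinal d0.
have key a : a \in L -> (forall x y, f x = f y -> dotv a (P x) = dotv a (P y)) ->
    a 0 r0 = 0 -> a = 0.
  move=> aL ac ar0; apply: (Mzero Hgen iinj jni) => //.
  - exact: aB.
  - by move=> s; apply: ac.
  - move=> r hr; suff -> : r = r0 by [].
    by apply: val_inj => /=; have := ltn_ord r; lia.
have al0 : a1 0 r0 != 0.
  by apply: contra a1n => /eqP H; apply/eqP; apply: key.
have : a2 0 r0 *: a1 - a1 0 r0 *: a2 = 0.
  apply: key.
  - by rewrite memvB ?memvZ.
  - by move=> x y fxy; rewrite !dotvBl !dotvZl (c1 _ _ fxy) (c2 _ _ fxy).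
  - by rewrite !mxE mulrC subrr.
move/eqP; rewrite subr_eq0 => /eqP E.
exists ((a1 0 r0)^-1 * a2 0 r0); rewrite -scalerA E scalerA mulVf //.
by rewrite scale1r.
Qed.

Lemma Exist (T : finType) (f : 'I_m -> T) : (k <= #|f @: [set: 'I_m]|)%N ->
  exists2 a, (a != 0) && (a \in L) &
    forall x y, f x = f y -> dotv a (P x) = dotv a (P y).
Proof.
move=> hT.
have hnn : (#|NonRoots f| < l)%N by rewrite card_NonRoots; lia.
pose e := fun s : 'I_#|NonRoots f| => enum_val s.
pose Dt : 'M[R]_(d, #|NonRoots f|) := \matrix_(j, s) (P (e s) - P (rep f (e s))) 0 j.
pose F : 'Hom('rV[R]_d, 'rV[R]_#|NonRoots f|) := linfun (mulmxr Dt).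
have H1 := limg_ker_dim F L.
have H2 : (\dim (F @: L) <= #|NonRoots f|)%N.
  by rewrite -[X in (_ <= X)%N](dimrV R) dimvS ?subvf.
have nz : (L :&: lker F)%VS != 0%VS.
  rewrite -dimv_eq0 -lt0n; rewrite hL in H1.
  by rewrite -(ltn_add2r (\dim (F @: L))) H1 add0n (leq_ltn_trans H2 hnn).
exists (vpick (L :&: lker F)).
  by rewrite vpick0 nz; have /memv_capP[-> _] := memv_pick (L :&: lker F).
have /memv_capP[aL] := memv_pick (L :&: lker F).
set a := vpick _; rewrite memv_ker lfunE /= => /eqP aD.
have ae s : dotv a (P (e s)) = dotv a (P (rep f (e s))).
  apply/eqP; rewrite -subr_eq0 -dotvBr; apply/eqP.
  have : (a *m Dt) 0 s = 0 by rewrite aD mxE.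
  rewrite mxE => E; rewrite dotvE; apply: (etrans _ E); apply: eq_bigr => j _.
  by rewrite /Dt !mxE.
have ar x : dotv a (P x) = dotv a (P (rep f x)).
  case: (boolP (x \in NonRoots f)) => xN.
    by have := ae (enum_rank_in xN x); rewrite /e enum_rankK_in.
  move: xN; rewrite /NonRoots inE negbK => /imsetP[z _ ->].
  by rewrite rep_rep.
by move=> x y fxy; rewrite ar (ar y) (rep_eq fxy).
Qed.

Local Notation phi a x := (dotv a (P x)).

Lemma traces_range (I : finType) (F : I -> set 'rV[R]_d) :
  traces P (range F)%classic = [set trace_of P (F x) | x in I].
Proof.
apply/setP => X; rewrite inE; apply/asboolP/imsetP.
  by case=> h' [x _ <-] ->; exists x.
by case=> x _ ->; exists (F x) => //; exists x.
Qed.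

Lemma good_data C : good_collection L k P C -> exists a (g : 'I_m -> 'I_k),
  [/\ (a != 0) && (a \in L), forall j, exists x, g x = j,
      C = range (fun x => hyperplane a (phi a x))%classic,
      traces P C = [set [set x | g x == j] | j in 'I_k] &
      forall x y, (g x == g y) = (phi a x == phi a y)].
Proof.
case=> a /andP[an aL] [h [hinj -> hh hcov]].
pose c j := projT1 (cid (hh j)).
have hc j : h j = hyperplane a (c j) := projT2 (cid (hh j)).
pose g x := projT1 (cid (hcov x)).
have hg x : phi a x = c (g x).
  by have := projT2 (cid (hcov x)); rewrite hc.
have cinj : injective c.
  by move=> j j' E; apply: hinj; rewrite !hc E.
have gfib x y : (g x == g y) = (phi a x == phi a y).
  by rewrite !hg (inj_eq cinj).
have gsurj j : exists x, g x = j.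
  suff /existsP[x /eqP] : [exists x, g x == j] by exists x.
  case: (boolP [exists x, g x == j]) => // nex; exfalso.
  have : a = 0.
    apply: (@Zero _ g) => //; last by move=> x y gxy; apply/eqP; rewrite -gfib gxy.
    have : (g @: [set: 'I_m] \subset [set: 'I_k] :\ j)%SET.
      apply/fintype.subsetP => _ /imsetP[x _ ->]; rewrite !inE andbT.
      by apply/negP => /eqP E; move/negP: nex; apply; apply/existsP; exists x; rewrite E.
    move/subset_leq_card => H; have := cardsD1 j [set: 'I_k]; rewrite finset.in_setT cardsT card_ord /=; by move=> E; rewrite [X in (_ < X)%N]E add1n ltnS.
  by move/eqP; rewrite (negbTE an).
exists a, g; split => //; first by rewrite an.
- rewrite /=; apply/seteqP; split => _ [z _ <-].
    by case: (gsurj z) => x <-; exists x => //; rewrite hc hg.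
  by exists (g z) => //; rewrite hc hg.
- rewrite traces_range; apply: eq_imset => j; apply/setP => x.
  by rewrite !inE hc; apply/asboolP/eqP => [E|<-]; [apply: cinj; rewrite -hg; exact: E | exact: hg].
Qed.

Lemma hyp_scale a t x : t != 0 ->
  hyperplane (t *: a) (phi (t *: a) x) = hyperplane a (phi a x).
Proof.
move=> tn; rewrite /hyperplane; apply/seteqP; split => z /=; rewrite !dotvZl.
  by apply: (mulfI tn).
by move=> ->.
Qed.

Lemma Sep (T : finType) (f : 'I_m -> T) a x y : (#|f @: [set: 'I_m]| <= k)%N ->
  a != 0 -> a \in L -> (forall x y, f x = f y -> phi a x = phi a y) ->
  phi a x = phi a y -> f x = f y.
Proof.
move=> hT an aL ac E.
case: (eqVneq (f x) (f y)) => // ne; exfalso.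
pose f' z := if f z == f y then f x else f z.
have : a = 0.
  apply: (@Zero _ f') => //.
    have : (f' @: [set: 'I_m] \subset (f @: [set: 'I_m]) :\ f y)%SET.
      apply/fintype.subsetP => _ /imsetP[z _ ->]; rewrite /f' !inE.
      case: ifP => [_|/negbT ->]; first by rewrite ne imset_f.
      by rewrite imset_f.
    move/subset_leq_card => H.
    have := cardsD1 (f y) (f @: [set: 'I_m]); rewrite imset_f ?finset.in_setT //= => E1.
    apply: (leq_ltn_trans H); by move: hT; rewrite E1 add1n.
  move=> z w; rewrite /f'.
  have key u : f u == f y -> phi a u = phi a x by move/eqP/ac ->; rewrite E.
  case: ifP => zy; case: ifP => wy e.
  - by rewrite (key z zy) (key w wy).
  - by rewrite (key z zy) (ac _ _ e).
  - by rewrite (key w wy) (ac _ _ e).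
  - exact: ac.
by move/eqP; rewrite (negbTE an).
Qed.

Lemma main_sec : set_bij [set C | good_collection L k P C]%classic
          [set Q | k_partition k Q]%classic (traces P).
Proof.
split.
- move=> C /good_data[a [g [/andP[an aL] gs hC -> gf]]]; split.
    have -> : [set [set x | g x == j] | j in 'I_k] = preim_partition g [set: 'I_m].
      apply/setP => X; apply/imsetP/imsetP => [[j _ ->]|[x _ ->]].
        case: (gs j) => x <-; exists x => //; apply/setP => y.
        by rewrite !inE eq_sym.
      by exists (g x) => //; apply/setP => y; rewrite !inE eq_sym.
    exact: preim_partitionP.
  rewrite card_imset ?cardsT ?card_ord // => j j' /setP E.
  case: (gs j) => x gx; have := E x; rewrite !inE gx eqxx.
  by move/esym/eqP.
- move=> C1 C2; rewrite !in_setE /=.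
  move=> /good_data[a1 [g1 [/andP[a1n a1L] gs1 hC1 tr1 gf1]]].
  move=> /good_data[a2 [g2 [/andP[a2n a2L] gs2 hC2 tr2 gf2]]].
  rewrite tr1 tr2 => E.
  have g12 x y : g1 x = g1 y -> g2 x = g2 y.
    move=> exy.
    have : [set z | g1 z == g1 x] \in [set [set x | g2 x == j] | j in 'I_k].
      by rewrite -E imset_f.
    case/imsetP => j _ /setP HX.
    have := HX x; have := HX y; rewrite !inE exy eqxx.
    by move=> /esym/eqP -> /esym/eqP ->.
  have c1 x y : g1 x = g1 y -> phi a1 x = phi a1 y.
    by move/eqP; rewrite gf1 => /eqP.
  have c2 x y : g1 x = g1 y -> phi a2 x = phi a2 y.
    by move/g12/eqP; rewrite gf2 => /eqP.
  have hT : (#|g1 @: [set: 'I_m]| <= k)%N.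
    by rewrite -[X in (_ <= X)%N](card_ord k) max_card.
  have [t ht] := Uniq hT a1L a2L a1n c1 c2.
  have tn : t != 0 by apply: contra a2n => /eqP t0; rewrite ht t0 scale0r.
  rewrite hC1 hC2 ht.
  have -> : (fun x => hyperplane (t *: a1) (phi (t *: a1) x)) =
            (fun x => hyperplane a1 (phi a1 x)).
    by apply: funext => x; exact: hyp_scale.
  by [].
- move=> Q /= [HP HQ].
  case/and3P: HP => /eqP covQ tI nQ0.
  have xcov x : x \in finset.cover Q by rewrite covQ inE.
  have imgQ : finset.pblock Q @: [set: 'I_m] = Q.
    apply/setP => X; apply/imsetP/idP => [[x _ ->]|XQ]; first exact: pblock_mem.
    have : X != finset.set0 by apply: contraNneq nQ0 => <-.
    case/finset.set0Pn => x xX; exists x => //; by rewrite (def_pblock tI XQ xX).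
  have hT : (#|finset.pblock Q @: [set: 'I_m]| <= k)%N by rewrite imgQ HQ.
  have hT2 : (k <= #|finset.pblock Q @: [set: 'I_m]|)%N by rewrite imgQ HQ.
  have [a /andP[an aL] ac] := @Exist _ (finset.pblock Q) hT2.
  have sep x y : phi a x = phi a y -> finset.pblock Q x = finset.pblock Q y.
    exact: Sep hT an aL ac.
  have trh x : trace_of P (hyperplane a (phi a x)) = finset.pblock Q x.
    apply/setP => y; rewrite inE; apply/asboolP/idP => [E|yx].
      by rewrite -(sep _ _ E) mem_pblock.
    exact: ac _ _ (same_pblock tI yx).
  have m0 : (0 < m)%N by lia.
  pose x0 : 'I_m := Ordinal m0.
  pose ev j := enum_val (cast_ord (esym HQ) j).
  have evQ j : ev j \in Q by exact: enum_valP.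
  have evinj : injective ev.
    by move=> j j' /enum_val_inj /(congr1 val) /= E; apply: val_inj.
  pose rp j := odflt x0 [pick x in ev j].
  have rpP j : rp j \in ev j.
    rewrite /rp; case: pickP => //= none; exfalso.
    have : ev j != finset.set0 by apply: contraNneq nQ0 => <-.
    by case/finset.set0Pn => x; rewrite none.
  have ev_rp j : finset.pblock Q (rp j) = ev j := def_pblock tI (evQ j) (rpP j).
  have jof z : exists j, phi a (rp j) = phi a z.
    exists (cast_ord HQ (enum_rank_in (pblock_mem (xcov z)) (finset.pblock Q z))).
    apply: ac; rewrite ev_rp /ev cast_ordK enum_rankK_in //.
    exact: pblock_mem.
  pose h j := hyperplane a (phi a (rp j)).
  exists (range (fun x => hyperplane a (phi a x)))%classic; last first.
    rewrite traces_range -[RHS]imgQ; apply/setP => X.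
    by apply/imsetP/imsetP => [[x _ ->]|[x _ ->]]; exists x => //; rewrite trh.
  rewrite /=; exists a; first by rewrite an aL.
  exists h; split.
  + move=> j j' E.
    have H : h j (P (rp j)) by [].
    rewrite E in H.
    have H' : phi a (rp j) = phi a (rp j') := H.
    by apply: evinj; rewrite -!ev_rp; apply: sep.
  + apply/seteqP; split => _ [z _ <-].
      by case: (jof z) => j hj; exists j => //; rewrite /h hj.
    by exists (rp z).
  + by move=> j; exists (phi a (rp j)).
  + by move=> i; case: (jof i) => j hj; exists j; rewrite /h /hyperplane /= hj.
Qed.

End Main.



Local Open Scope classical_set_scope.

Theorem lemma3p1 (R : realType) (d l k : nat) (L : {vspace 'rV[R]_d})
    (B : seq 'rV[R]_d) (P : 'I_(l - 1 + k) -> 'rV[R]_d) :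
  (1 <= l)%N -> \dim L = l -> basis_of_perp L B -> (1 <= k)%N ->
  injective P ->
  generic_position ([seq P i | i <- enum 'I_(l - 1 + k)] ++ B) ->
  set_bij [set C | good_collection L k P C]
          [set Q | k_partition k Q]
          (traces P).
Proof.
move=> hl hL hB hk _ Hgen.
exact: (main_sec hl hL hB hk Hgen).
Qed.
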